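(* Let $\|\cdot\|_F$ and $\|\cdot\|_G$ be $F$-norms on $\mathbb{R}^{d+1}$. Then $\|\cdot\|_F=\|\cdot\|_G$ if and only if $\{\mathbf{x}\in[0,\infty)^{d+1}:\|\mathbf{x}\|_F=1\}=\{\mathbf{x}\in[0,\infty)^{d+1}:\|\mathbf{x}\|_G=1\}$; that is, each $F$-norm is characterized by the part of its unit sphere contained in the positive orthant.
   Context: An $F$-norm on $\mathbb{R}^{d+1}$ is a norm of the form $\|\mathbf{x}\|_F=E(\max(|x_0|,|x_1|X_1,\dots,|x_d|X_d))$, where $\mathbf{X}=(X_1,\dots,X_d)$ has distribution function $F$ and each $X_i$ is a.s. nonnegative with $0<E(X_i)<\infty$. *)

(* Defs.v *)
From HB Require Import structures.
From mathcomp Require Import all_boot all_order all_algebra.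
From mathcomp Require Import all_classical all_reals all_analysis.
Set Implicit Arguments. Unset Strict Implicit. Unset Printing Implicit Defensive.
Import Order.TTheory GRing.Theory Num.Theory.
Local Open Scope classical_set_scope.
Local Open Scope ring_scope.

(* A random vector X = (X_1,...,X_d) on a probability space (T, P), whose
   distribution is F, is admissible for an F-norm: each X_i is measurable,
   a.s. nonnegative, integrable, with 0 < E(X_i) (< oo by integrability). *)
Definition Fnorm_generator {R : realType} {dT : measure_display}
  {T : measurableType dT} (P : probability T R) (d : nat)
  (X : 'I_d -> T -> R) : Prop :=
  forall i : 'I_d,
    [/\ measurable_fun setT (X i),
        {ae P, forall t, 0 <= X i t},
        P.-integrable setT (EFin \o X i) &
        (0 < \int[P]_t (X i t)%:E)%E].

(* The integrand max(|x_0|, |x_1| X_1, ..., |x_d| X_d), for x in R^(d+1)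
   represented as a row vector with coordinates x_0 = x 0 0 and
   x_(i+1) = x 0 (lift ord0 i). *)
Definition Fnorm_integrand {R : realType} {T : Type} (d : nat)
  (X : 'I_d -> T -> R) (x : 'rV[R]_d.+1) (t : T) : R :=
  \big[Num.max/`|x ord0 ord0|]_(i < d) (`|x ord0 (lift ord0 i)| * X i t).

(* ||x||_F = E(max(|x_0|, |x_1| X_1, ..., |x_d| X_d)) (finite under the
   hypotheses Fnorm_generator). *)
Definition Fnorm {R : realType} {dT : measure_display} {T : measurableType dT}
  (P : probability T R) (d : nat) (X : 'I_d -> T -> R) (x : 'rV[R]_d.+1) : R :=
  fine (\int[P]_t (Fnorm_integrand X x t)%:E).

Definition pos_unit_sphere {R : realType} (d : nat) (N : 'rV[R]_d.+1 -> R)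
  : set 'rV[R]_d.+1 :=
  [set x : 'rV[R]_d.+1 | (forall j, 0 <= x ord0 j) /\ N x = 1].

(* Main.v *)
Require Import Defs.
From HB Require Import structures.
From mathcomp Require Import all_boot all_order all_algebra.
From mathcomp Require Import all_classical all_reals all_analysis.
From mathcomp Require Import measurable_realfun.
Import Order.TTheory GRing.Theory Num.Theory.
Local Open Scope classical_set_scope.
Local Open Scope ring_scope.

Lemma integrand_ge0 (R : realType) (T : Type) (d : nat) (X : 'I_d -> T -> R)
  (x : 'rV[R]_d.+1) t : 0 <= Fnorm_integrand X x t.
Proof.
rewrite /Fnorm_integrand; elim/big_rec: _ => // i y _ hy.
by rewrite le_max hy orbT.
Qed.

Lemma integrand_meas (R : realType) (dT : measure_display) (T : measurableType dT)
  (P : probability T R) (d : nat) (X : 'I_d -> T -> R) (x : 'rV[R]_d.+1) :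
  Fnorm_generator P X -> measurable_fun setT (Fnorm_integrand X x).
Proof.
move=> hX; rewrite /Fnorm_integrand.
have mF i : measurable_fun setT (fun t => `|x ord0 (lift ord0 i)| * X i t).
  apply: measurable_funM; first exact: measurable_cst.
  by case: (hX i).
suff H : forall r, measurable_fun setT (fun t =>
  \big[Num.max/`|x ord0 ord0|]_(i <- r) (`|x ord0 (lift ord0 i)| * X i t)).
  exact: H.
elim=> [|i r ih].
  under eq_fun do rewrite big_nil. exact: measurable_cst.
under eq_fun do rewrite big_cons.
exact: (measurable_maxr (mF i) ih).
Qed.

Lemma Fnorm_ge0 (R : realType) (dT : measure_display) (T : measurableType dT)
  (P : probability T R) (d : nat) (X : 'I_d -> T -> R) (x : 'rV[R]_d.+1) :
  0 <= Fnorm P X x.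
Proof.
apply: fine_ge0; apply: integral_ge0 => t _; rewrite lee_fin; exact: integrand_ge0.
Qed.

Lemma Fnorm_abs (R : realType) (dT : measure_display) (T : measurableType dT)
  (P : probability T R) (d : nat) (X : 'I_d -> T -> R) (x : 'rV[R]_d.+1) :
  Fnorm P X (map_mx (fun a => `|a|) x) = Fnorm P X x.
Proof.
rewrite /Fnorm /Fnorm_integrand; congr fine; apply: eq_integral => t _.
by congr EFin; rewrite !mxE normr_id; apply: eq_bigr => i _; rewrite !mxE normr_id.
Qed.

Lemma Fnorm_scale (R : realType) (dT : measure_display) (T : measurableType dT)
  (P : probability T R) (d : nat) (X : 'I_d -> T -> R) (x : 'rV[R]_d.+1) (c : R) :
  Fnorm_generator P X -> 0 <= c -> Fnorm P X (c *: x) = c * Fnorm P X x.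
Proof.
move=> hX c0; rewrite /Fnorm.
have -> : (fun t => (Fnorm_integrand X (c *: x) t)%:E) =
          (fun t => (c%:E * (Fnorm_integrand X x t)%:E)%E).
  apply: funext => t; rewrite /Fnorm_integrand /=; congr EFin.
  rewrite (big_morph (fun a : R => c * a) (id1 := `|(c *: x) ord0 ord0|)
    (op1 := Num.max) (id2 := `|x ord0 ord0|) (op2 := Num.max)).
  - by apply: eq_bigr => i _; rewrite mxE normrM (ger0_norm c0) mulrA.
  - by move=> a b; rewrite maxr_pMr.
  - by rewrite mxE normrM (ger0_norm c0).
rewrite ge0_integralZl_EFin //.
- have [->|cn0] := eqVneq c 0; first by rewrite mul0e mul0r.
  have cp : 0 < c by rewrite lt_def cn0 c0.
  case: (integral _ _ _) => [r||] //=.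
  + by rewrite mulr_infty gtr0_sg // mul1e mulr0.
  + by rewrite mulr_infty gtr0_sg // mul1e mulr0.
- by move=> t _; rewrite lee_fin; exact: integrand_ge0.
- by apply/measurable_EFinP; exact: integrand_meas.
Qed.
Lemma abstract_eq (R : realType) (d : nat) (N1 N2 : 'rV[R]_d.+1 -> R)
  (h1 : forall (c : R) (x : 'rV[R]_d.+1), 0 <= c -> N1 (c *: x) = c * N1 x)
  (h2 : forall (c : R) (x : 'rV[R]_d.+1), 0 <= c -> N2 (c *: x) = c * N2 x)
  (p1 : forall x, 0 <= N1 x) (p2 : forall x, 0 <= N2 x) :
  pos_unit_sphere N1 = pos_unit_sphere N2 ->
  forall y : 'rV[R]_d.+1, (forall j, 0 <= y ord0 j) -> N1 y = N2 y.
Proof.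
move=> E y y0.
have gen : forall (M1 M2 : 'rV[R]_d.+1 -> R),
  (forall (c : R) (x : 'rV[R]_d.+1), 0 <= c -> M1 (c *: x) = c * M1 x) ->
  (forall (c : R) (x : 'rV[R]_d.+1), 0 <= c -> M2 (c *: x) = c * M2 x) ->
  pos_unit_sphere M1 = pos_unit_sphere M2 -> 0 < M1 y -> M1 y = M2 y.
  move=> M1 M2 k1 k2 EM pos.
  have hz : pos_unit_sphere M1 ((M1 y)^-1 *: y).
    split.
      by move=> j; rewrite mxE mulr_ge0 // invr_ge0 ltW.
    by rewrite k1 ?invr_ge0 ?ltW // mulVf // gt_eqF.
  rewrite EM in hz; case: hz => _.
  rewrite k2 ?invr_ge0 ?ltW // => h.
  have : M1 y * ((M1 y)^-1 * M2 y) = M1 y by rewrite h mulr1.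
  by rewrite mulrA mulfV ?gt_eqF // mul1r => ->.
have [pos|] := ltP 0 (N1 y); first exact: gen.
have [pos2|] := ltP 0 (N2 y); first by move=> _; symmetry; apply: gen.
move=> a b; apply/eqP; rewrite eq_le; apply/andP; split.
  exact: le_trans b (p2 _).
exact: le_trans a (p1 _).
Qed.

Theorem corollary6p1 (R : realType) (d : nat)
  (d1 : measure_display) (T1 : measurableType d1) (P1 : probability T1 R)
  (X : 'I_d -> T1 -> R)
  (d2 : measure_display) (T2 : measurableType d2) (P2 : probability T2 R)
  (Y : 'I_d -> T2 -> R) :
  Fnorm_generator P1 X -> Fnorm_generator P2 Y ->
  ((forall x : 'rV[R]_d.+1, Fnorm P1 X x = Fnorm P2 Y x) <->
   pos_unit_sphere (Fnorm P1 X) = pos_unit_sphere (Fnorm P2 Y)).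
Proof.
move=> hX hY; split.
  by move=> H; have -> : Fnorm P1 X = Fnorm P2 Y := funext H.
move=> E x.
rewrite -(@Fnorm_abs _ _ _ P1 _ X x) -(@Fnorm_abs _ _ _ P2 _ Y x).
apply: abstract_eq => //.
- by move=> c z c0; apply: Fnorm_scale.
- by move=> c z c0; apply: Fnorm_scale.
- by move=> z; apply: Fnorm_ge0.
- by move=> z; apply: Fnorm_ge0.
- by move=> j; rewrite mxE.
Qed.
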